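(* Let $X\subset\operatorname{Hol}(\mathbb{D})$ be a Banach space such that (X1) for each $w\in\mathbb{D}$ the map $f\mapsto f(w)$, $X\to\mathbb{C}$, is continuous; (X2) $X$ contains the polynomials and they are dense in $X$; (X3) if $f\in X$ then $zf\in X$. Let $Y\subset X$ be a set such that (Y1) if $g\in X$ and $0<\inf_{\mathbb{D}}|g|\le\sup_{\mathbb{D}}|g|<\infty$, then $g\in Y$; (Y2) for every $\lambda\in\mathbb{T}$, the function $g(z):=z-\lambda$ belongs to $Y$. Let $\Lambda:X\to\mathbb{C}$ be a continuous linear functional such that $\Lambda(1)=1$ and $\Lambda(g)\neq0$ for all $g\in Y$. Then there exists $w\in\mathbb{D}$ such that \[ \Lambda(f)=f(w)\qquad(f\in X). \]
   Context: $\mathbb{D}$ is the open unit disk, $\mathbb{T}$ the unit circle, and $\operatorname{Hol}(\mathbb{D})$ the space of holomorphic functions on $\mathbb{D}$. *)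

(* Defs.v *)
From HB Require Import structures.
From mathcomp Require Import all_boot all_order all_algebra.
From mathcomp Require Export complex.
From mathcomp Require Import all_classical all_reals all_analysis.
Import Order.TTheory GRing.Theory Num.Theory numFieldNormedType.Exports.
Local Open Scope ring_scope.
Local Open Scope classical_set_scope.

Definition disk (R : realType) : set R[i] := [set z : R[i] | `|z| < 1].

(* f is holomorphic on A: complex differentiable at every point of A
   (derivable over the field R[i], in direction 1). *)
Definition holomorphic_on (R : realType) (A : set R[i]) (f : R[i] -> R[i]) :=
  forall z, A z -> derivable (f : R[i]^o -> R[i]^o) z 1.

(* Main.v *)
Require Import Defs.
From HB Require Import structures.
From mathcomp Require Import all_boot all_order all_algebra.
From mathcomp Require Import complex ring.
From mathcomp Require Import all_classical all_reals all_analysis.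
Import Order.TTheory GRing.Theory Num.Theory numFieldNormedType.Exports.
Local Open Scope ring_scope.
Local Open Scope classical_set_scope.

Lemma closed_eqfun (R : realType) (V : completeNormedModType R[i]) (f g : V -> R[i]^o) :
  continuous f -> continuous g -> closed [set u | f u = g u].
Proof.
move=> cf cg.
have -> : [set u | f u = g u] = (fun u => f u - g u) @^-1` [set (0:R[i]^o)].
  apply/seteqP; split => u /=.
    by move=> ->; rewrite subrr.
  by move/eqP; rewrite subr_eq0 => /eqP.
apply: (proj1 (continuous_closedP _)).
  by move=> x; exact: (continuousB (cf x) (cg x)).
apply: accessible_closed_set1; apply: hausdorff_accessible; exact: norm_hausdorff.
Qed.

Lemma bin2x N : ('C(N,2) * 2 = N * N.-1)%N.
Proof. by have := bin_ffact N 2; rewrite ffactnS ffactn1. Qed.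

Lemma root_bound (C : numClosedFieldType) n (F : {poly C}) :
  F`_0 = 1 -> (size F <= n.+1)%N -> (forall x, `|x| < 1 -> F.[x] != 0) ->
  `|2 * F`_2 - F`_1 ^+ 2| <= n%:R.
Proof.
elim: n F => [|n IH] F F0 sF nz.
  rewrite !nth_default //; last exact: leq_trans sF _.
  by rewrite expr0n /= mulr0 subr0 normr0.
have [sF'|sFn] := leqP (size F) n.+1.
  by apply: le_trans (IH F F0 sF' nz) _; rewrite ler_nat.
have sF2 : size F = n.+2 by apply/eqP; rewrite eqn_leq sF sFn.
have : size F != 1%N by rewrite sF2.
move/closed_rootP => [r rootr].
have r1 : 1 <= `|r|.
  rewrite real_leNgt ?normr_real ?real1 //; apply/negP => /nz.
  by move/rootP: rootr => ->; rewrite eqxx.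
have r0 : r != 0 by apply/eqP => r0; move: r1; rewrite r0 normr0 ler10.
move/factor_theorem: rootr => [q Fq].
have q0 : q != 0 by apply/eqP => q0; move: sF2; rewrite Fq q0 mul0r size_poly0.
pose s := r^-1.
pose G := (- r) *: q.
have FG : F = G - s *: (G * 'X).
  rewrite Fq /G /s -scalerAl scalerA mulrN mulVf // scaleN1r opprK.
  by rewrite mulrBr [q * r%:P]mulrC mul_polyC scaleNr addrC.
have sG : (size G <= n.+1)%N.
  rewrite size_scale ?oppr_eq0 //.
  move: sF2; rewrite Fq size_mul ?polyXsubC_eq0 // size_XsubC addn2 /=.
  by case=> ->.
clearbody G.
have cF k : F`_k = G`_k - s * (if k == 0%N then 0 else G`_k.-1).
  by rewrite FG coefB coefZ coefMX.
have G0 : G`_0 = 1 by rewrite -F0 cF /= mulr0 subr0.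
have nzG x : `|x| < 1 -> G.[x] != 0.
  move=> /nz; apply: contra => /eqP G0x.
  by rewrite FG hornerD hornerN hornerZ hornerMX G0x mul0r mulr0 subrr.
have IHG := IH G G0 sG nzG.
have -> : 2 * F`_2 - F`_1 ^+ 2 = (2 * G`_2 - G`_1 ^+ 2) - s ^+ 2.
  rewrite !cF /= G0; ring.
apply: le_trans (ler_normB _ _) _.
rewrite -[n.+1]addn1 natrD lerD // normrX exprn_ile1 // normfV invf_le1 //.
by rewrite normr_gt0.
Qed.

Lemma core_bound (C : numClosedFieldType) (b : nat -> C) :
  b 0%N = 1 -> b 1%N = 0 ->
  (forall N lam, `|lam| < 1 ->
     \sum_(k < N.+1) ('C(N,k)%:R * (-1) ^+ k * b k) * lam ^+ k != 0) ->
  forall N, (1 < N)%N -> `|b 2%N| * (N.-1)%:R <= 1.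
Proof.
move=> b0 b1 H N N1.
pose F := \poly_(k < N.+1) ('C(N,k)%:R * (-1) ^+ k * b k).
have cF k : (k < N.+1)%N -> F`_k = 'C(N,k)%:R * (-1) ^+ k * b k.
  by move=> kN; rewrite coef_poly kN.
have := @root_bound C N F.
rewrite cF // b0 bin0 mulr1 expr0 mulr1 => /(_ erefl).
rewrite size_poly => /(_ isT).
have nz x : `|x| < 1 -> F.[x] != 0 by move=> /H; rewrite horner_poly.
move=> /(_ nz).
rewrite (cF 1%N) ?(cF 2%N) ?ltnS ?(ltnW N1) // b1 mulr0 expr0n /= subr0.
rewrite sqrrN expr1n mulr1 mulrA -natrM mulnC bin2x normrM.
rewrite natrM normrM !normr_nat -mulrA.
have N0 : 0 < (N%:R : C) by rewrite ltr0n (ltnW N1).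
rewrite -[X in _ <= X]mulr1 ler_pM2l // mulrC; exact.
Qed.

Lemma small_zero (R : realType) (x : R[i]) :
  (forall N, (1 < N)%N -> `|x| * (N.-1)%:R <= 1) -> x = 0.
Proof.
move=> H; apply/eqP; apply/negPn/negP => x0.
have nx : 0 < `|x| by rewrite normr_gt0.
move: nx H; rewrite normc_def ltcR.
set t := Num.sqrt _ => t0 H.
move: (H (Num.Def.archi_bound (t^-1)).+2 isT) => /=.
have ti : 0 <= t^-1 by rewrite invr_ge0 ltW.
have tb := @archi_boundP R (t^-1) ti.
set B := Num.Def.archi_bound _ in tb *.
have -> : (B.+1%:R : R[i]) = (B.+1%:R : R)%:C%C by rewrite rmorph_nat.
rewrite -rmorphM /= -[1 : R[i]]/((1:R)%:C%C) lecR.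
apply/negP; rewrite -ltNge -ltr_pdivrMl //.
by rewrite mulr1; apply: lt_le_trans tb _; rewrite ler_nat.
Qed.

Theorem theorem7p1 (R : realType) (V : completeNormedModType R[i])
  (iota : V -> R[i] -> R[i]) (Y : set V) (Lam : V -> R[i])
  (* X is a linear subspace of Hol(D) *)
  (iota_hol : forall u, holomorphic_on R (disk R) (iota u))
  (iota_lin : forall (a : R[i]) (u v : V) z, disk R z ->
      iota (a *: u + v) z = a * iota u z + iota v z)
  (iota_inj : forall u v : V, (forall z, disk R z -> iota u z = iota v z) -> u = v)
  (* (X1) *)
  (X1 : forall w, disk R w -> continuous (fun u : V => (iota u w : R[i]^o)))
  (* (X2) *)
  (X2poly : forall p : {poly R[i]}, exists u : V, forall z, disk R z -> iota u z = p.[z])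
  (X2dense : closure [set u : V | exists p : {poly R[i]},
                        forall z, disk R z -> iota u z = p.[z]] = setT)
  (* (X3) *)
  (X3 : forall u : V, exists v : V, forall z, disk R z -> iota v z = z * iota u z)
  (* Y is a subset of X with (Y1), (Y2) *)
  (Y1 : forall g : V, (exists m M : R[i], 0 < m /\
          forall z, disk R z -> m <= `|iota g z| <= M) -> Y g)
  (Y2 : forall lam : R[i], `|lam| = 1 ->
          forall g : V, (forall z, disk R z -> iota g z = z - lam) -> Y g)
  (* Lambda is a continuous linear functional *)
  (Lam_lin : forall (a : R[i]) (u v : V), Lam (a *: u + v) = a * Lam u + Lam v)
  (Lam_cont : continuous (Lam : V -> R[i]^o))
  (Lam1 : forall u : V, (forall z, disk R z -> iota u z = 1) -> Lam u = 1)
  (LamY : forall g : V, Y g -> Lam g <> 0) :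
  exists w : R[i], disk R w /\ forall u : V, Lam u = iota u w.
Proof.
have Pex : forall p : {poly R[i]}, {u : V | forall z, disk R z -> iota u z = p.[z]}.
  by move=> p; apply: cid; exact: X2poly p.
pose P p := sval (Pex p).
have PE p z : disk R z -> iota (P p) z = p.[z] := svalP (Pex p) z.
have Puniq p u : (forall z, disk R z -> iota u z = p.[z]) -> u = P p.
  by move=> hu; apply: iota_inj => z Dz; rewrite hu // PE.
clearbody P.
pose L p := Lam (P p).
have Llin a p q : L (a *: p + q) = a * L p + L q.
  rewrite /L -Lam_lin; congr Lam; symmetry; apply: Puniq => z Dz.
  by rewrite iota_lin // !PE // hornerD hornerZ.
have L1 : L 1 = 1 by apply: Lam1 => z Dz; rewrite PE // hornerC.
have L0 : L 0 = 0.
  move: (Llin 1 0 0); rewrite scale1r addr0 mul1r.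
  by move/(congr1 (fun x => x - L 0)); rewrite subrr addrK.
have LD p q : L (p + q) = L p + L q by have := Llin 1 p q; rewrite scale1r mul1r.
have LZ a p : L (a *: p) = a * L p by have := Llin a p 0; rewrite !addr0 L0 addr0.
have LN p : L (- p) = - L p by rewrite -scaleN1r LZ mulN1r.
have LB p q : L (p - q) = L p - L q by rewrite LD LN.
have LC c : L c%:P = c by rewrite -alg_polyC LZ L1 mulr1.
have LCm c p : L (c%:P * p) = c * L p by rewrite mul_polyC LZ.
have Lsum n (F : 'I_n -> {poly R[i]}) : L (\sum_(i < n) F i) = \sum_(i < n) L (F i).
  exact: (big_morph L LD L0).
have LY p (m M : R[i]) : 0 < m -> (forall z, disk R z -> m <= `|p.[z]| <= M) -> L p != 0.
  move=> m0 hb; apply/eqP; apply: LamY; apply: Y1; exists m, M; split=> // z Dz.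
  by rewrite PE //; exact: hb.
have LE p : Lam (P p) = L p by [].
clearbody L.
pose w := L 'X.
have Lw c : L ('X - c%:P) = w - c by rewrite LB LC.
have w1 : `|w| < 1.
  have [//|nw] := boolP (`|w| < 1).
  have : 1 <= `|w| by rewrite real_leNgt ?normr_real ?real1.
  rewrite le_eqVlt => /orP[/eqP w1|w1].
    have [u hu] := X2poly ('X - w%:P).
    have Yu : Y u by apply: (Y2 w (esym w1)) => z Dz; rewrite hu // hornerXsubC.
    have := LamY u Yu; rewrite (Puniq _ _ hu) LE Lw subrr.
    by move/(_ erefl).
  have := LY ('X - w%:P) (`|w| - 1) (`|w| + 1).
  rewrite Lw subrr eqxx subr_gt0 => /(_ w1) H; exfalso; apply: notF; apply: H.
  move=> z Dz; have Dz' : `|z| < 1 := Dz.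
  rewrite hornerXsubC distrC; apply/andP; split.
    by apply: le_trans (lerB_dist _ _); rewrite lerB // ltW.
  apply: le_trans (ler_normB _ _) _. by rewrite lerD2l ltW.
have Dw : disk R w := w1.
have sq0 a : L a = 0 -> L (a ^+ 2) = 0.
  move=> La.
  pose M := \sum_(i < size a) `|a`_i| + 1.
  have M0 : 0 < M by rewrite /M ltr_wpDl // sumr_ge0.
  have Ma z : disk R z -> `|a.[z]| <= M - 1.
    move=> Dz; have Dz' : `|z| < 1 := Dz.
    rewrite /M addrK horner_coef; apply: le_trans (ler_norm_sum _ _ _) _.
    apply: ler_sum => i _; rewrite normrM normrX.
    by rewrite ler_piMr // exprn_ile1 // ltW.
  pose a' := M^-1 *: a.
  have a'1 z : disk R z -> `|a'.[z]| <= 1.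
    move=> Dz; rewrite hornerZ normrM normfV (gtr0_norm M0).
    rewrite ler_pdivrMl // mulr1; apply: le_trans (Ma z Dz) _.
    by rewrite lerBlDr lerDl.
  pose b k := L (a' ^+ k).
  have b0 : b 0%N = 1 by rewrite /b expr0 L1.
  have b1 : b 1%N = 0 by rewrite /b expr1 LZ La mulr0.
  have Hb N lam : `|lam| < 1 ->
      \sum_(k < N.+1) ('C(N,k)%:R * (-1) ^+ k * b k) * lam ^+ k != 0.
    move=> lam1.
    have -> : \sum_(k < N.+1) ('C(N,k)%:R * (-1) ^+ k * b k) * lam ^+ k
            = L ((1 - lam *: a') ^+ N).
      rewrite addrC exprD1n Lsum; apply: eq_bigr => k _.
      rewrite -[X in L X]scaler_nat -scaleNr exprZn !LZ /b (exprNn lam) -!mulrA; congr (_ * (_ * _)); exact: mulrC.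
    apply: (LY _ ((1 - `|lam|) ^+ N) (2 ^+ N)).
      by rewrite exprn_gt0 // subr_gt0.
    move=> z Dz.
    rewrite horner_exp hornerD hornerN hornerZ hornerC normrX.
    have la : `|lam * a'.[z]| <= `|lam|.
      by rewrite normrM ler_piMr // a'1.
    have lo : 1 - `|lam| <= `|1 - lam * a'.[z]|.
      by apply: le_trans (lerB_dist _ _); rewrite normr1 lerB.
    have hi : `|1 - lam * a'.[z]| <= 2.
      apply: le_trans (ler_normB _ _) _; rewrite normr1.
      by rewrite -[2]/(1 + 1) lerD2l (le_trans la) // ltW.
    apply/andP; split.
      by apply: (lerXn2r N _ _ lo); rewrite nnegrE // subr_ge0 ltW.
    by apply: (lerXn2r N _ _ hi); rewrite nnegrE.
  have B := @core_bound _ b b0 b1 Hb.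
  have b2 := @small_zero R (b 2%N) B.
  have -> : a = M *: a' by rewrite /a' scalerA mulfV ?gt_eqF // scale1r.
  by rewrite exprZn LZ -/(b 2%N) b2 mulr0.
have sqL p : L (p ^+ 2) = L p ^+ 2.
  pose c := L p.
  have := sq0 (p - c%:P); rewrite LB LC subrr => /(_ erefl).
  have -> : (p - c%:P) ^+ 2 = p ^+ 2 + (- (2 * c))%:P * p + (c ^+ 2)%:P.
    rewrite polyCN polyCM rmorphXn /=; ring.
  rewrite !LD LCm LC -/c => H; rewrite -[LHS]subr0 -H; ring.
have mulL p q : L (p * q) = L p * L q.
  have := sqL (p + q).
  have -> : (p + q) ^+ 2 = p ^+ 2 + q ^+ 2 + (2 : R[i])%:P * (p * q).
    rewrite rmorph_nat; ring.
  rewrite !LD LCm !sqL => /eqP.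
  rewrite -subr_eq0 => /eqP H.
  have : 2 * (L (p * q) - L p * L q) = 0 by rewrite -H; ring.
  by move/eqP; rewrite mulf_eq0 pnatr_eq0 /= subr_eq0 => /eqP.
have Lev p : L p = p.[w].
  elim/poly_ind: p => [|p c IH]; first by rewrite L0 horner0.
  by rewrite LD mulL LC IH hornerMXaddC.
exists w; split => // u.
have cl := @closed_eqfun R V Lam (fun u => iota u w) Lam_cont (X1 w Dw).
have Hsub : [set u : V | exists p : {poly R[i]},
               forall z, disk R z -> iota u z = p.[z]] `<=` [set u | Lam u = iota u w].
  move=> v [p hp]; rewrite /= (Puniq _ _ hp) LE Lev PE //.
have := closureS Hsub; rewrite X2dense -(proj1 (closure_id _) cl).
by move/(_ u I).
Qed.
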